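(* Let $G(\mathcal Y)$ be a developable complex of groups over a connected scwol $\mathcal Y$, let $T$ be a maximal tree in $\mathcal Y$, and identify each local group $G_\sigma$ with its image in $\pi_1(G(\mathcal Y),T)$ under $\iota_T$. Let $N_T$ be the kernel of the action homomorphism $\pi_1(G(\mathcal Y),T)\to\mathrm{Aut}(D(\mathcal Y,T))$. Then: (1) $N_T\le G_\sigma$ for every $\sigma\in V(\mathcal Y)$; (2) $\psi_a(N_T)=N_T$ for every $a\in E(\mathcal Y)$; (3) $N_T\trianglelefteq G_\sigma$ for every $\sigma\in V(\mathcal Y)$; (4) if $N'$ is any subgroup of $\pi_1(G(\mathcal Y),T)$ with $N'\le G_\sigma$ and $N'\trianglelefteq G_\sigma$ for every $\sigma\in V(\mathcal Y)$ and $\psi_a(N')=N'$ for every $a\in E(\mathcal Y)$, then $N'\le N_T$.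
   Context: Scwols. A scwol $\mathcal X$ consists of a set $V(\mathcal X)$ of vertices, a set $E(\mathcal X)$ of edges, maps $i,t:E(\mathcal X)\to V(\mathcal X)$, and a composition $(a,b)\mapsto ab\in E(\mathcal X)$ defined on $E^{(2)}(\mathcal X)=\{(a,b): i(a)=t(b)\}$, such that $i(ab)=i(b)$, $t(ab)=t(a)$, $(ab)c=a(bc)$ whenever defined, and $i(a)\neq t(a)$ for all $a$. For a vertex $\alpha$ put $i(\alpha)=t(\alpha)=\alpha$. The geometric realization $|\mathcal X|$ has one $k$-simplex for each sequence of $k$ composable edges; $\mathcal X$ is connected if $|\mathcal X|$ is. A maximal tree in $\mathcal X$ means a maximal tree in the 1-skeleton of $|\mathcal X|$. Complexes of groups. A complex of groups $G(\mathcal Y)=(G_\sigma,\psi_a,g_{a,b})$ over a scwol $\mathcal Y$ consists of groups $G_\sigma$ ($\sigma\in V(\mathcal Y)$), injective homomorphisms $\psi_a:G_{i(a)}\to G_{t(a)}$ ($a\in E(\mathcal Y)$) and elements $g_{a,b}\in G_{t(a)}$ ($(a,b)\in E^{(2)}(\mathcal Y)$) with $\mathrm{Ad}(g_{a,b})\psi_{ab}=\psi_a\psi_b$ and $\psi_a(g_{b,c})g_{a,bc}=g_{a,b}g_{ab,c}$. It is developable if it is isomorphic to the complex of groups associated to an action of a group on a scwol; for developable $G(\mathcal Y)$ over connected $\mathcal Y$, the maps $G_\sigma\to\pi_1(G(\mathcal Y),T)$ are injective. Fundamental group and universal cover. The universal group $FG(\mathcal Y)$ is generated by $\bigsqcup_\sigma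 G_\sigma$ and symbols $a^+,a^-$ ($a\in E(\mathcal Y)$) subject to: the relations of each $G_\sigma$; $(a^\pm)^{-1}=a^\mp$; $a^+b^+=g_{a,b}(ab)^+$ for $(a,b)\in E^{(2)}(\mathcal Y)$; $\psi_a(g)=a^+ga^-$ for $g\in G_{i(a)}$. For a maximal tree $T$ in $\mathcal Y$, $\pi_1(G(\mathcal Y),T)$ is the quotient of $FG(\mathcal Y)$ by the additional relations $a^+=1$ for $a$ in $T$; $\iota_T$ sends $g\in G_\sigma$ to its image and $a$ to the image of $a^+$. The universal cover $D(\mathcal Y,T)$ is the scwol with vertices $([g],\sigma)$, $\sigma\in V(\mathcal Y)$, $[g]\in \pi_1(G(\mathcal Y),T)/\iota_T(G_\sigma)$, edges $([g],a)$, $a\in E(\mathcal Y)$, $[g]\in\pi_1(G(\mathcal Y),T)/\iota_T(G_{i(a)})$, $i([g],a)=([g],i(a))$, $t([g],a)=([g\,\iota_T(a)^{-1}],t(a))$, and $([g],a)([h],b)=([h],ab)$ when $(a,b)\in E^{(2)}(\mathcal Y)$ and $g^{-1}h\,\iota_T(b)^{-1}\in\iota_T(G_{i(a)})$; $\pi_1(G(\mathcal Y),T)$ acts by $h\cdot([g],\alpha)=([hg],\alpha)$. *)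

(* Defs.v *)
From Stdlib Require Import List.
Import ListNotations.
Set Implicit Arguments.

Record Group := {
  carrier :> Type;
  gop : carrier -> carrier -> carrier;
  gone : carrier;
  ginv : carrier -> carrier;
  gop_assoc : forall x y z, gop x (gop y z) = gop (gop x y) z;
  gop_1l : forall x, gop gone x = x;
  gop_1r : forall x, gop x gone = x;
  gop_Vl : forall x, gop (ginv x) x = gone;
  gop_Vr : forall x, gop x (ginv x) = gone }.
Arguments gop {g}.
Arguments gone {g}.
Arguments ginv {g}.

(* composition is a total function, only meaningful on composable pairs
   (i(a) = t(b)); all axioms are stated only for composable pairs. *)
Record Scwol := {
  sV : Type;
  sE : Type;
  ini : sE -> sV;
  ter : sE -> sV;
  cmp : sE -> sE -> sE;
  cmp_ini : forall a b, ini a = ter b -> ini (cmp a b) = ini b;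
  cmp_ter : forall a b, ini a = ter b -> ter (cmp a b) = ter a;
  cmp_assoc : forall a b c, ini a = ter b -> ini b = ter c ->
      cmp (cmp a b) c = cmp a (cmp b c);
  no_loop : forall a, ini a <> ter a }.
Arguments cmp_ini {s a b}.
Arguments cmp_ter {s a b}.

Inductive reach (Y : Scwol) (ES : sE Y -> Prop) : sV Y -> sV Y -> Prop :=
| reach_refl v : reach Y ES v v
| reach_fwd u a : ES a -> reach Y ES u (ini Y a) -> reach Y ES u (ter Y a)
| reach_bwd u a : ES a -> reach Y ES u (ter Y a) -> reach Y ES u (ini Y a).

Arguments reach {Y}.

(* |Y| is connected iff its 1-skeleton is connected *)
Definition connected (Y : Scwol) : Prop :=
  forall u v : sV Y, reach (fun _ => True) u v.

(* a subtree (VS, ES) of the 1-skeleton of |Y| : nonempty, connected,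
   and acyclic (every edge is a bridge, i.e. lies on no cycle) *)
Definition is_tree (Y : Scwol) (VS : sV Y -> Prop) (ES : sE Y -> Prop) : Prop :=
  (exists v, VS v) /\
  (forall a, ES a -> VS (ini Y a) /\ VS (ter Y a)) /\
  (forall u v, VS u -> VS v -> reach ES u v) /\
  (forall a, ES a -> ~ reach (fun b => ES b /\ b <> a) (ini Y a) (ter Y a)).

Arguments is_tree {Y}.

(* a maximal tree: a subtree not strictly contained in any other;
   it is given by its edge set T *)
Definition maximal_tree {Y : Scwol} (T : sE Y -> Prop) : Prop :=
  exists VS : sV Y -> Prop, is_tree VS T /\
    forall (VS' : sV Y -> Prop) (ES' : sE Y -> Prop), is_tree VS' ES' ->
      (forall v, VS v -> VS' v) -> (forall a, T a -> ES' a) ->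
      (forall v, VS' v -> VS v) /\ (forall a, ES' a -> T a).

Definition gcast {I : Type} (G : I -> Group) {s t : I} (e : s = t) (x : G s) : G t :=
  eq_rect s (fun s => carrier (G s)) x t e.

Record Complex (Y : Scwol) := {
  grp : sV Y -> Group;
  psi : forall a : sE Y, grp (ini Y a) -> grp (ter Y a);
  gab : forall a b : sE Y, grp (ter Y a);   (* g_{a,b}, used for i(a)=t(b) *)
  psi_mul : forall a x y, psi a (gop x y) = gop (psi a x) (psi a y);
  psi_inj : forall a x y, psi a x = psi a y -> x = y;
  (* Ad(g_{a,b}) psi_{ab} = psi_a psi_b *)
  psi_compat : forall (a b : sE Y) (h : ini Y a = ter Y b) (x : grp (ini Y b)),
      gop (gop (gab a b)
               (gcast grp (cmp_ter h) (psi (cmp Y a b) (gcast grp (eq_sym (cmp_ini h)) x))))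
          (ginv (gab a b))
      = psi a (gcast grp (eq_sym h) (psi b x));
  (* psi_a(g_{b,c}) g_{a,bc} = g_{a,b} g_{ab,c} *)
  cocycle : forall (a b c : sE Y) (hab : ini Y a = ter Y b) (hbc : ini Y b = ter Y c),
      gop (psi a (gcast grp (eq_sym hab) (gab b c))) (gab a (cmp Y b c))
      = gop (gab a b) (gcast grp (cmp_ter hab) (gab (cmp Y a b) c)) }.
Arguments grp {Y}.
Arguments psi {Y}.
Arguments gab {Y}.

Unset Implicit Arguments.
Section Pi1.
Variables (Y : Scwol) (CG : Complex Y) (T : sE Y -> Prop).

(* generators of FG(Y): elements of the local groups, and a^+ (true), a^- (false) *)
Inductive gen : Type :=
| GV (s : sV Y) (x : grp CG s)
| GE (a : sE Y) (sgn : bool).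
Arguments GV {s}.

(* a letter is a generator (true) or its formal inverse (false) *)
Definition letter := (gen * bool)%type.
Definition word := list letter.
Definition flip (l : letter) : letter := (fst l, negb (snd l)).
Definition winv (w : word) : word := rev (map flip w).

Inductive relator : word -> Prop :=
| rel_mul s (x y : grp CG s) :
    relator [(GV x, true); (GV y, true); (GV (gop x y), false)]
| rel_pm a : relator [(GE a true, true); (GE a false, true)]
| rel_comp a b : ini Y a = ter Y b ->
    relator [(GE a true, true); (GE b true, true); (GE (cmp Y a b) true, false);
             (GV (gab CG a b), false)]
| rel_psi a (x : grp CG (ini Y a)) :
    relator [(GV (psi CG a x), true); (GE a false, false); (GV x, false);
             (GE a true, false)]
| rel_tree a : T a -> relator [(GE a true, true)].

(* equality in pi_1(G(Y),T): the congruence on words generated by free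
   cancellation and the relators *)
Inductive weq : word -> word -> Prop :=
| weq_refl w : weq w w
| weq_sym u v : weq u v -> weq v u
| weq_trans u v w : weq u v -> weq v w -> weq u w
| weq_cat u u' v v' : weq u u' -> weq v v' -> weq (u ++ v) (u' ++ v')
| weq_free l : weq [l; flip l] []
| weq_rel r : relator r -> weq r [].

Definition iotaV (s : sV Y) (x : grp CG s) : word := [(GV x, true)].
Arguments iotaV {s}.
Definition iotaE (a : sE Y) : word := [(GE a true, true)].

(* subgroups of pi_1 (as weq-closed sets of words) *)
Definition is_subgroup (P : word -> Prop) : Prop :=
  (forall u v, weq u v -> P u -> P v) /\ P [] /\
  (forall u v, P u -> P v -> P (u ++ v)) /\ (forall u, P u -> P (winv u)).

(* ----- the universal cover D(Y,T): vertices ([g],s), edges ([g],a) ----- *)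
Definition Dvert := (word * sV Y)%type.
Definition Dedge := (word * sE Y)%type.
(* equality of vertices/edges: same s (resp. a), same left coset
   g iota_T(G_s) (resp. g iota_T(G_{i(a)})) *)
Definition Dvert_eq (v w : Dvert) : Prop :=
  snd v = snd w /\ exists x : grp CG (snd v), weq (fst w) (fst v ++ iotaV x).
Definition Dedge_eq (e f : Dedge) : Prop :=
  snd e = snd f /\ exists x : grp CG (ini Y (snd e)), weq (fst f) (fst e ++ iotaV x).
Definition D_ini (e : Dedge) : Dvert := (fst e, ini Y (snd e)).
Definition D_ter (e : Dedge) : Dvert := (fst e ++ winv (iotaE (snd e)), ter Y (snd e)).
Definition actV (h : word) (v : Dvert) : Dvert := (h ++ fst v, snd v).
Definition actE (h : word) (e : Dedge) : Dedge := (h ++ fst e, snd e).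

Definition N_T (h : word) : Prop :=
  (forall v, Dvert_eq (actV h v) v) /\ (forall e, Dedge_eq (actE h e) e).

(* iota_T is injective on each local group (G_s identified with its image) *)
Definition iota_injective : Prop :=
  forall s (x y : grp CG s), weq (iotaV x) (iotaV y) -> x = y.

Definition sub_local (P : word -> Prop) (s : sV Y) : Prop :=
  forall h, P h -> exists x : grp CG s, weq h (iotaV x).
Definition normalised_by_local (P : word -> Prop) (s : sV Y) : Prop :=
  forall (x : grp CG s) h, P h -> P (iotaV x ++ h ++ winv (iotaV x)).
(* psi_a(P) = P, for P <= G_{i(a)}, both sides viewed in pi_1 *)
Definition psi_stable (P : word -> Prop) (a : sE Y) : Prop :=
  forall y, P y <-> exists x : grp CG (ini Y a), P (iotaV x) /\ weq y (iotaV (psi CG a x)).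

End Pi1.
Arguments gen {Y}.
Arguments letter {Y}.
Arguments word {Y}.
Arguments flip {Y}.
Arguments winv {Y}.
Arguments relator {Y}.
Arguments weq {Y}.
Arguments iotaV {Y} CG {s}.
Arguments iotaE {Y}.
Arguments is_subgroup {Y}.
Arguments Dvert {Y}.
Arguments Dedge {Y}.
Arguments Dvert_eq {Y}.
Arguments Dedge_eq {Y}.
Arguments D_ini {Y}.
Arguments D_ter {Y}.
Arguments actV {Y}.
Arguments actE {Y}.
Arguments N_T {Y}.
Arguments iota_injective {Y}.
Arguments sub_local {Y}.
Arguments normalised_by_local {Y}.
Arguments psi_stable {Y}.
Arguments GV {Y CG s}.
Arguments GE {Y CG}.

(* Main.v *)
Require Import Defs.
From Stdlib Require Import List Setoid Morphisms.
Import ListNotations.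

Section Proofs.
Context {Y : Scwol} (CG : Complex Y) (T : sE Y -> Prop).

Notation W := (@word Y CG).
Notation "u ~~ v" := (weq CG T u v) (at level 70).

#[global] Instance weq_equiv : Equivalence (weq CG T).
Proof. split; red; intros; eauto using weq_refl, weq_sym, weq_trans. Qed.

#[global] Instance app_proper : Proper (weq CG T ==> weq CG T ==> weq CG T) (@app (@letter Y CG)).
Proof. intros u u' Hu v v' Hv; apply weq_cat; auto. Qed.

Lemma winv_app (u v : W) : winv CG (u ++ v) = winv CG v ++ winv CG u.
Proof. unfold winv. rewrite map_app, rev_app_distr. reflexivity. Qed.

Lemma flip_flip (l : @letter Y CG) : flip CG (flip CG l) = l.
Proof. destruct l as [g b]; unfold flip; simpl; rewrite Bool.negb_involutive; reflexivity. Qed.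

Lemma winv_inv (u : W) : winv CG (winv CG u) = u.
Proof.
  unfold winv. rewrite map_rev, rev_involutive, map_map.
  induction u; simpl; [reflexivity|]. rewrite flip_flip, IHu. reflexivity.
Qed.

Lemma winv_cons (l : @letter Y CG) (u : W) : winv CG (l :: u) = winv CG u ++ [flip CG l].
Proof. reflexivity. Qed.

Lemma rinv (w : W) : w ++ winv CG w ~~ [].
Proof.
  induction w as [|l w IH]; [reflexivity|].
  rewrite winv_cons.
  replace ((l :: w) ++ winv CG w ++ [flip CG l]) with ([l] ++ (w ++ winv CG w) ++ [flip CG l])
    by (simpl; rewrite <- app_assoc; reflexivity).
  rewrite IH. simpl. apply weq_free.
Qed.

Lemma linv (w : W) : winv CG w ++ w ~~ [].
Proof. rewrite <- (winv_inv w) at 2. apply rinv. Qed.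

Lemma weq_winv (u v : W) : u ~~ v -> winv CG u ~~ winv CG v.
Proof.
  induction 1.
  - reflexivity.
  - symmetry; auto.
  - etransitivity; eauto.
  - rewrite !winv_app. rewrite IHweq1, IHweq2. reflexivity.
  - unfold winv; simpl. rewrite flip_flip. apply weq_free.
  - unfold winv at 2; simpl.
    transitivity (winv CG r ++ r).
    + rewrite <- (app_nil_r (winv CG r)) at 1. apply weq_cat; [reflexivity|]. symmetry. exact (weq_rel _ _ _ _ H).
    + apply linv.
Qed.

#[global] Instance winv_proper : Proper (weq CG T ==> weq CG T) (winv CG).
Proof. intros u v E; apply weq_winv; exact E. Qed.

Lemma cancel_r (u w : W) : u ++ winv CG w ~~ [] -> u ~~ w.
Proof.
  intro H. transitivity (u ++ winv CG w ++ w).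
  - rewrite linv, app_nil_r; reflexivity.
  - rewrite app_assoc, H. reflexivity.
Qed.

Lemma one_triv (s : sV Y) : iotaV CG (gone : grp CG s) ~~ [].
Proof.
  pose proof (weq_rel _ _ _ _ (rel_mul _ CG T s gone gone)) as H.
  rewrite gop_1l in H.
  transitivity ([(GV (gone : grp CG s), true)] ++ [(GV (gone : grp CG s), true); (GV (gone : grp CG s), false)]).
  - rewrite (weq_free _ CG T (GV (gone : grp CG s), true)). rewrite app_nil_r; reflexivity.
  - exact H.
Qed.

Lemma mulV (s : sV Y) (x y : grp CG s) : iotaV CG x ++ iotaV CG y ~~ iotaV CG (gop x y).
Proof.
  apply cancel_r. unfold iotaV, winv; simpl.
  apply (weq_rel _ _ _ _ (rel_mul _ CG T s x y)).
Qed.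

Lemma mul_inv (s : sV Y) (x : grp CG s) : iotaV CG x ++ iotaV CG (ginv x) ~~ [].
Proof. rewrite mulV, gop_Vr. apply one_triv. Qed.

Lemma inv_letter (s : sV Y) (x : grp CG s) : [(GV x, false)] ~~ iotaV CG (ginv x).
Proof.
  transitivity ([(GV x, false)] ++ (iotaV CG x ++ iotaV CG (ginv x))).
  - rewrite mul_inv, app_nil_r; reflexivity.
  - rewrite app_assoc. unfold iotaV. rewrite (weq_free _ CG T (GV x, false)). reflexivity.
Qed.

Lemma aminus (a : sE Y) : [(@GE Y CG a false, true)] ~~ [(GE a true, false)].
Proof.
  symmetry.
  transitivity ([(@GE Y CG a true, false)] ++ [(GE a true, true); (GE a false, true)]).
  - rewrite (weq_rel _ _ _ _ (rel_pm _ CG T a)). rewrite app_nil_r; reflexivity.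
  - change ([(@GE Y CG a true, false)] ++ [(GE a true, true); (GE a false, true)])
      with ([(@GE Y CG a true, false); flip CG (GE a true, false)] ++ [(@GE Y CG a false, true)]).
    rewrite (weq_free _ CG T (GE a true, false)). reflexivity.
Qed.

Lemma psi_conj (a : sE Y) (x : grp CG (ini Y a)) :
  iotaV CG (psi CG a x) ~~ iotaE CG a ++ iotaV CG x ++ winv CG (iotaE CG a).
Proof.
  transitivity (iotaE CG a ++ iotaV CG x ++ [(GE a false, true)]).
  - apply cancel_r. unfold iotaV, iotaE, winv; simpl.
    apply (weq_rel _ _ _ _ (rel_psi _ CG T a x)).
  - rewrite aminus. reflexivity.
Qed.

Definition K (h : W) : Prop :=
  forall g (s : sV Y), exists x : grp CG s, g ~~ h ++ g ++ iotaV CG x.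

Lemma NT_iff h : N_T CG T h <-> K h.
Proof.
  split.
  - intros [HV _] g s. destruct (HV (g, s)) as [_ [x Hx]]. exists x.
    simpl in Hx. rewrite <- app_assoc in Hx. exact Hx.
  - intros HK. split.
    + intros [g s]. split; [reflexivity|]. destruct (HK g s) as [x Hx].
      exists x. simpl. rewrite <- app_assoc. exact Hx.
    + intros [g a]. split; [reflexivity|]. destruct (HK g (ini Y a)) as [x Hx].
      exists x. simpl. rewrite <- app_assoc. exact Hx.
Qed.

Lemma K_weq u v : u ~~ v -> K u -> K v.
Proof. intros E H g s. destruct (H g s) as [x Hx]. exists x. rewrite <- E. exact Hx. Qed.

Lemma K_conj k h : K h -> K (k ++ h ++ winv CG k).
Proof.
  intros H g s. destruct (H (winv CG k ++ g) s) as [x Hx]. exists x.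
  transitivity (k ++ (winv CG k ++ g)).
  - rewrite app_assoc, rinv. reflexivity.
  - rewrite Hx. rewrite !app_assoc. reflexivity.
Qed.

Lemma K_local h s : K h -> exists x : grp CG s, h ~~ iotaV CG x.
Proof.
  intro H. destruct (H [] s) as [x Hx]. exists (ginv x).
  transitivity (h ++ (iotaV CG x ++ iotaV CG (ginv x))).
  - rewrite mul_inv, app_nil_r; reflexivity.
  - rewrite app_assoc. simpl in Hx. rewrite <- Hx. reflexivity.
Qed.

Lemma K_subgroup : is_subgroup CG T K.
Proof.
  split; [|split; [|split]].
  - intros u v E H; exact (K_weq u v E H).
  - intros g s. exists gone. rewrite one_triv. simpl. rewrite app_nil_r. reflexivity.
  - intros u v Hu Hv g s. destruct (Hv g s) as [x Hx].
    destruct (Hu (v ++ g) s) as [x' Hx']. exists (gop x' x).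
    transitivity ((v ++ g) ++ iotaV CG x).
    { rewrite <- app_assoc. exact Hx. }
    rewrite Hx' at 1. rewrite <- mulV.
    rewrite !app_assoc. reflexivity.
  - intros u Hu g s. destruct (Hu g s) as [x Hx]. exists (ginv x).
    rewrite Hx at 2. rewrite !app_assoc.
    rewrite <- (app_assoc _ (iotaV CG x)), mul_inv, app_nil_r.
    rewrite linv. reflexivity.
Qed.

Lemma conj_weq (P : W -> Prop) (l : @letter Y CG) (w : W) :
  (forall u v, u ~~ v -> P u -> P v) ->
  [l] ~~ w -> (forall n, P n -> P (w ++ n ++ winv CG w)) ->
  forall n, P n -> P ([l] ++ n ++ [flip CG l]).
Proof.
  intros Hc E Hw n Hn. apply (Hc (w ++ n ++ winv CG w)); [|auto].
  change [flip CG l] with (winv CG [l]). rewrite E. reflexivity.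
Qed.

Lemma main4 (N' : W -> Prop) : is_subgroup CG T N' ->
  (forall s, sub_local CG T N' s /\ normalised_by_local CG N' s) ->
  (forall a, psi_stable CG T N' a) -> forall h, N' h -> K h.
Proof.
  intros [Hc [H0 [Hm Hi]]] Hs Hp.
  assert (Hl : forall l n, N' n -> N' ([l] ++ n ++ [flip CG l])).
  { intros [[s x|a sg] b].
    - destruct b.
      + intros n Hn. apply (proj2 (Hs s)). exact Hn.
      + apply (conj_weq N' _ (iotaV CG (ginv x)) Hc (inv_letter s x)).
        intros n Hn. apply (proj2 (Hs s)). exact Hn.
    - assert (Hplus : forall n, N' n -> N' (iotaE CG a ++ n ++ winv CG (iotaE CG a))).
      { intros n Hn. destruct (proj1 (Hs (ini Y a)) n Hn) as [x0 Hx0].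
        apply (proj2 (Hp a _)). exists x0. split.
        - apply (Hc n); auto.
        - rewrite psi_conj, Hx0. reflexivity. }
      assert (Hminus : forall n, N' n -> N' (winv CG (iotaE CG a) ++ n ++ iotaE CG a)).
      { intros n Hn. destruct (proj1 (Hp a n) Hn) as [x0 [Hx0 E]].
        apply (Hc (iotaV CG x0)); auto.
        rewrite E, psi_conj. rewrite !app_assoc. rewrite linv, app_nil_l.
        rewrite <- !app_assoc. rewrite linv, app_nil_r. reflexivity. }
      destruct sg, b.
      + exact Hplus.
      + intros n Hn. apply Hminus in Hn. exact Hn.
      + apply (conj_weq N' _ (winv CG (iotaE CG a)) Hc (aminus a)).
        intros n Hn. rewrite winv_inv. auto.
      + assert (E : [(@GE Y CG a false, false)] ~~ iotaE CG a).
        { change [(@GE Y CG a false, false)] with (winv CG [(@GE Y CG a false, true)]).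
          rewrite aminus. reflexivity. }
        apply (conj_weq N' _ _ Hc E). exact Hplus. }
  assert (Hconj : forall k n, N' n -> N' (k ++ n ++ winv CG k)).
  { induction k as [|l k IH]; intros n Hn.
    - simpl. unfold winv; simpl. rewrite app_nil_r. exact Hn.
    - rewrite winv_cons.
      replace ((l :: k) ++ n ++ winv CG k ++ [flip CG l]) with ([l] ++ (k ++ n ++ winv CG k) ++ [flip CG l])
        by (simpl; rewrite <- !app_assoc; reflexivity).
      apply Hl. apply IH. exact Hn. }
  intros h Hh g s.
  pose proof (Hconj (winv CG g) (winv CG h) (Hi h Hh)) as Hn.
  rewrite winv_inv in Hn.
  destruct (proj1 (Hs s) _ Hn) as [x Hx]. exists x.
  rewrite <- Hx. rewrite !app_assoc. rewrite <- (app_assoc h g), rinv, app_nil_r, rinv.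
  reflexivity.
Qed.

End Proofs.

Theorem mainTheorem3 (Y : Scwol) (CG : Complex Y) (T : sE Y -> Prop) :
  connected Y -> maximal_tree T ->
  (* developability: G_s -> pi_1(G(Y),T) injective, so G_s is identified with its image *)
  iota_injective CG T ->
  (* (1) *) (forall s, sub_local CG T (N_T CG T) s) /\
  (* (2) *) (forall a, psi_stable CG T (N_T CG T) a) /\
  (* (3) *) (is_subgroup CG T (N_T CG T) /\
             forall s, normalised_by_local CG (N_T CG T) s) /\
  (* (4) *) (forall N' : word CG -> Prop, is_subgroup CG T N' ->
               (forall s, sub_local CG T N' s /\ normalised_by_local CG N' s) ->
               (forall a, psi_stable CG T N' a) ->
               forall h, N' h -> N_T CG T h).
Proof.
  intros _ _ _.
  split; [|split; [|split]].
  - intros s h Hh. apply NT_iff in Hh. exact (K_local CG T h s Hh).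
  - intros a y. rewrite NT_iff. split.
    + intro Hy.
      assert (Hz : K CG T (winv CG (iotaE CG a) ++ y ++ winv CG (winv CG (iotaE CG a)))) by (apply K_conj; exact Hy).
      rewrite winv_inv in Hz.
      destruct (K_local CG T _ (ini Y a) Hz) as [x Hx]. exists x. split.
      * apply NT_iff. apply (K_weq CG T _ _ Hx Hz).
      * rewrite (psi_conj CG T a x), <- Hx. rewrite !app_assoc, rinv. simpl.
        rewrite <- !app_assoc, rinv, app_nil_r. reflexivity.
    + intros [x [Hx E]]. apply NT_iff in Hx.
      apply (K_weq CG T _ _ (symmetry E)). apply (K_weq CG T _ _ (symmetry (psi_conj CG T a x))).
      apply K_conj. exact Hx.
  - split.
    + destruct (K_subgroup CG T) as [A [B [C D]]].
      split; [|split; [|split]]; intros; rewrite ?NT_iff in *; eauto.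
    + intros s x h Hh. apply NT_iff in Hh. apply NT_iff. apply K_conj. exact Hh.
  - intros N' HN Hs Hp h Hh. apply NT_iff. exact (main4 CG T N' HN Hs Hp h Hh).
Qed.
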